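(* Let $\mathbf A$ be a regular BBL transformation of bandwidth $(p,q)$ and let $L\le R$ be finite integers with $R-L\ge\tau$. Then $\dim\mathcal M_{L,R}=d\tau$.
   Context: Fix $d\ge1$; $\mathbf M_d$ denotes complex $d\times d$ matrices. $\mathcal V^S_d$ is the vector space of all doubly infinite sequences $\Psi=\{\psi_j\}_{j\in\mathbb Z}$ with $\psi_j\in\mathbb C^d$. A matrix Laurent polynomial of bandwidth $(p,q)$ is $A(w,w^{-1})=\sum_{r=p}^q a_rw^r$ with integers $p\le q$, $a_r\in\mathbf M_d$, $a_p\neq0\neq a_q$. Its banded block-Laurent (BBL) transformation $\mathbf A$ acts on $\mathcal V^S_d$ by $(\mathbf A\Psi)_j=\sum_{r=p}^q a_r\psi_{j+r}$. $\mathbf A$ is regular if $\det\big(w^{-p}A(w,w^{-1})\big)$ is not the zero polynomial. Put $p'=\min(p,0)$, $q'=\max(0,q)$, $\tau=q'-p'$. For $-\infty\le L\le R\le\infty$, $\mathcal V_{L,R}$ is the subspace of sequences with $\psi_j=0$ whenever $j<L$ or $j>R$, and $\mathbf P_{L,R}$ is the projection onto $\mathcal V_{L,R}$ replacing $\psi_j$ by $0$ for $j\notin[L,R]$. The bulk solution space is $\mathcal M_{L,R}=\ker\big(\mathbf P_{L-p',R-q'}\mathbf A|_{\mathcal V_{L,R}}\big)$; for finite $L\le R$ this equals $\ker P_BA_N$, where $A_N=\mathbf P_{L,R}\mathbf A|_{\mathcal V_{L,R}}$ is the $dN\times dN$ block-Toeplitz matrix with blocks $a_{j-i}$, $N=R-L+1$,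 and $P_B=\mathbf P_{L-p',R-q'}|_{\mathcal V_{L,R}}$. *)

(* Defs.v *)
From HB Require Import structures.
From mathcomp Require Import all_boot all_order all_algebra.
Set Implicit Arguments. Unset Strict Implicit. Unset Printing Implicit Defensive.
Import Order.TTheory GRing.Theory Num.Theory.
Local Open Scope ring_scope.

(* A BBL transformation of bandwidth (p,q) is given by the coefficient family
   a : int -> 'M_d, of which only a p, ..., a q are used:
   A(w,w^-1) = \sum_{r=p}^q a_r w^r. *)

Definition bbl_apply (C : fieldType) (d : nat) (a : int -> 'M[C]_d) (p q : int)
  (psi : int -> 'cV[C]_d) (j : int) : 'cV[C]_d :=
  \sum_(k < `|q - p|%N.+1) a (p + k%:Z) *m psi (j + p + k%:Z).

(* The polynomial matrix w^{-p} A(w,w^{-1}) = \sum_{k=0}^{q-p} a_{p+k} w^k. *)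
Definition shifted_symbol (C : fieldType) (d : nat) (a : int -> 'M[C]_d) (p q : int)
  : 'M[{poly C}]_d :=
  \matrix_(i, j) \sum_(k < `|q - p|%N.+1) (a (p + k%:Z) i j)%:P * 'X^k.

Definition bbl_regular (C : fieldType) (d : nat) (a : int -> 'M[C]_d) (p q : int) : bool :=
  \det (shifted_symbol a p q) != 0.

Definition pprime (p : int) : int := Num.min p 0.
Definition qprime (q : int) : int := Num.max 0 q.
Definition tau (p q : int) : nat := `|qprime q - pprime p|%N.

Definition nsites (L R : int) : nat := `|R - L|%N.+1.

(* An element of V_{L,R} is represented by the d x N matrix whose c-th column
   is psi_{L+c}; ext_seq turns it into the doubly infinite sequence (zero
   outside [L,R]). *)
Definition ext_seq (C : fieldType) (d N : nat) (L : int) (Psi : 'M[C]_(d, N))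
  (j : int) : 'cV[C]_d :=
  match insub `|j - L|%N with
  | Some c => if L <= j then col c Psi else 0
  | None => 0
  end.

(* The bulk operator P_{L-p',R-q'} A restricted to V_{L,R}, as a map
   V_{L,R} -> V_{L,R} (entries outside the bulk range set to zero). *)
Definition bulk_op (C : fieldType) (d : nat) (a : int -> 'M[C]_d) (p q L R : int)
  (Psi : 'M[C]_(d, nsites L R)) : 'M[C]_(d, nsites L R) :=
  \matrix_(i < d, c < nsites L R)
    (if (L - pprime p <= L + c%:Z) && (L + c%:Z <= R - qprime q)
     then bbl_apply a p q (@ext_seq C d (nsites L R) L Psi) (L + c%:Z) i ord0
     else 0).

Definition bulk_space (C : fieldType) (d : nat) (a : int -> 'M[C]_d) (p q L R : int)
  : {vspace 'M[C]_(d, nsites L R)} :=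
  lker (linfun (@bulk_op C d a p q L R)).

(* Main.v *)
Require Import Defs.
From HB Require Import structures.
From mathcomp Require Import all_boot all_order all_algebra.
From mathcomp Require Import zify.
Import Order.TTheory GRing.Theory Num.Theory.
Local Open Scope ring_scope.

Lemma ext_seqP (C : fieldType) (d N : nat) (L : int) (k : C) (X Y : 'M[C]_(d, N)) j :
  ext_seq L (k *: X + Y) j = k *: ext_seq L X j + ext_seq L Y j.
Proof.
rewrite /ext_seq; case: insub => [c|]; last by rewrite scaler0 addr0.
by case: ifP => _; rewrite ?linearP // scaler0 addr0.
Qed.

Lemma bulk_op_lin (C : fieldType) (d : nat) (a : int -> 'M[C]_d) (p q L R : int) :
  linear (@bulk_op C d a p q L R).
Proof.
move=> k X Y; apply/matrixP => i c; rewrite !mxE.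
case: ifP => _; last by rewrite mulr0 addr0.
rewrite /bbl_apply !summxE mulr_sumr -big_split /=; apply: eq_bigr => r _.
by rewrite ext_seqP mulmxDr -scalemxAr !mxE.
Qed.

HB.instance Definition _ (C : fieldType) (d : nat) (a : int -> 'M[C]_d) (p q L R : int) :=
  GRing.isLinear.Build C _ _ _ (@bulk_op C d a p q L R) (@bulk_op_lin C d a p q L R).

Lemma pprimeE p : (pprime p = p /\ p <= 0) \/ (pprime p = 0 /\ 0 <= p).
Proof. rewrite /pprime /Num.min; case: (ltrP p 0) => h; [left|right]; split => //; lia. Qed.
Lemma qprimeE q : (qprime q = q /\ 0 <= q) \/ (qprime q = 0 /\ q <= 0).
Proof. rewrite /qprime /Num.max; case: (ltrP 0 q) => h; [left|right]; split => //; lia. Qed.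

Lemma idx1 (p q L R : int) (c : nat) : p <= q -> (tau p q)%:Z <= R - L ->
  (c < nsites L R)%N ->
  ((L - pprime p <= L + c%:Z) && (L + c%:Z <= R - qprime q)) =
  (`|pprime p| <= c < `|pprime p| + (nsites L R - tau p q))%N.
Proof.
rewrite /tau /nsites => hpq ht hc.
have := pprimeE p; have := qprimeE q.
move=> [[-> h1]|[-> h1]] [[-> h2]|[-> h2]]; apply/idP/idP; lia.
Qed.
Lemma poly_key (C : fieldType) d m M (b : nat -> 'M[C]_d) (Y : 'M[C]_(d,M)) :
  \det (\matrix_(i, j) \sum_(k < m.+1) (b k i j)%:P * 'X^k) != 0 ->
  (forall j (n : nat), (n < M + m)%N ->
     \sum_i \sum_(t < M) (\sum_(k < m.+1) b k i j * ((t + k)%N == n)%:R) * Y i t = 0) ->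
  Y = 0.
Proof.
set P := \matrix_(i, j) _ => hdet hY.
pose Phi : 'rV[{poly C}]_d := \row_i \sum_(t < M) (Y i t)%:P * 'X^t.
have hPhi : Phi *m P = 0.
  apply/rowP => j; rewrite !mxE; apply/polyP => n; rewrite coef0 coef_sum.
  have -> : \sum_i (Phi 0 i * P i j)`_n =
     \sum_i \sum_(t < M) (\sum_(k < m.+1) b k i j * ((t + k)%N == n)%:R) * Y i t.
    apply: eq_bigr => i _; rewrite !mxE mulr_suml coef_sum; apply: eq_bigr => t _.
    rewrite mulr_sumr coef_sum mulr_suml; apply: eq_bigr => k _.
    rewrite mulrACA -polyCM -exprD coefCM coefXn eq_sym.
    by rewrite [RHS]mulrC mulrA.
  case: (ltnP n (M + m)) => hn; first exact: hY.
  apply: big1 => i _; apply: big1 => t _; rewrite big1 ?mul0r // => k _.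
  have : (t + k < n)%N by have := ltn_ord t; have := ltn_ord k; lia.
  by rewrite ltn_neqAle => /andP [/negbTE -> _]; rewrite mulr0.
have hPhi0 : Phi = 0.
  have := congr1 (mulmx^~ (\adj P)) hPhi.
  rewrite -mulmxA mul_mx_adj mul_mx_scalar mul0mx => /eqP.
  move/eqP/rowP => h; apply/rowP => i; have := h i; rewrite !mxE => /eqP.
  by rewrite mulf_eq0 (negbTE hdet) /= => /eqP.
apply/matrixP => i t; rewrite mxE.
have := congr1 (fun r : 'rV[{poly C}]_d => (r 0 i)`_t) hPhi0.
rewrite !mxE coef0 coef_sum => <-.
rewrite (bigD1 t) //= coefCM coefXn eqxx mulr1 big1 ?addr0 // => t' ht'.
rewrite coefCM coefXn.
have -> : (nat_of_ord t == nat_of_ord t') = false by apply/negbTE; rewrite eq_sym.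
by rewrite mulr0.
Qed.

Lemma mxvec_dot (C : fieldType) m n (X Y : 'M[C]_(m, n)) :
  (mxvec X *m (mxvec Y)^T) 0 0 = \sum_i \sum_j X i j * Y i j.
Proof.
rewrite mxE (reindex _ (curry_mxvec_bij _ _)) /= pair_bigA.
by apply: eq_bigr => [[i j]] _; rewrite !mxE !mxvecE.
Qed.

Lemma ext_seq_delta (C : fieldType) d n L (i0 : 'I_d) (c0 : 'I_n) (k : nat) (l : 'I_d) :
  (k < n)%N -> @ext_seq C d n L (delta_mx i0 c0) (L + k%:Z) l 0 =
  ((l == i0) && (k == c0))%:R.
Proof.
move=> hk; rewrite /ext_seq.
have -> : absz (L + k%:Z - L)%R = k by lia.
case: insubP => [c' _ hc|]; last by rewrite hk.
have -> : (L <= L + k%:Z) = true by lia.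
by rewrite !mxE -hc.
Qed.

Definition colsel (C : fieldType) d n M s (Z : 'M[C]_(d, n.+1)) : 'M[C]_(d, M) :=
  \matrix_(i, t) Z i (inord (s + t)).

Definition hfun (C : fieldType) (d : nat) (a : int -> 'M[C]_d) (p q L R : int)
  (X : 'M[C]_(d, nsites L R)) : 'M[C]_(d, (nsites L R - tau p q)%N) :=
  @colsel C d `|R - L|%N _ `|pprime p|%N (@bulk_op C d a p q L R X).

Lemma hfun_lin (C : fieldType) (d : nat) (a : int -> 'M[C]_d) (p q L R : int) :
  linear (@hfun C d a p q L R).
Proof.
move=> k X Y; apply/matrixP => i t; rewrite /hfun /colsel (@bulk_op_lin C d a p q L R).
by rewrite !mxE.
Qed.

HB.instance Definition _ (C : fieldType) (d : nat) (a : int -> 'M[C]_d) (p q L R : int) :=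
  GRing.isLinear.Build C _ _ _ (@hfun C d a p q L R) (@hfun_lin C d a p q L R).

Lemma arith_hd (p q L R : int) (t k c0 : nat) :
  p <= q -> (tau p q)%:Z <= R - L -> (t < nsites L R - tau p q)%N ->
  (k < `|q - p|.+1)%N ->
  [/\ (`|pprime p| + t < nsites L R)%N,
      (L - pprime p <= L + (`|pprime p| + t)%N%:Z) && (L + (`|pprime p| + t)%N%:Z <= R - qprime q),
      L + (`|pprime p| + t)%N%:Z + p + k%:Z = L + (t + k + `|p - pprime p|)%N%:Z &
      (t + k + `|p - pprime p| < nsites L R)%N].
Proof.
rewrite /tau /nsites => hpq ht ht0 hk.
have hP := pprimeE p; have hQ := qprimeE q.
split; lia.
Qed.

Lemma hfun_delta (C : fieldType) d (a : int -> 'M[C]_d) p q L R (j0 : 'I_d) (c0 : nat)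
  (i : 'I_d) (t : 'I_(nsites L R - tau p q)) :
  p <= q -> (tau p q)%:Z <= R - L -> (c0 < nsites L R)%N ->
  @hfun C d a p q L R (delta_mx j0 (inord c0)) i t =
  \sum_(k < `|q - p|%N.+1) a (p + k%:Z) i j0 * ((t + k + `|p - pprime p|)%N == c0)%:R.
Proof.
move=> hpq ht hc0.
have [hst hcond _ _] := @arith_hd p q L R t 0 0 hpq ht (ltn_ord t) (ltn0Sn _).
rewrite /hfun /colsel mxE /bulk_op mxE inordK // hcond.
rewrite /bbl_apply summxE; apply: eq_bigr => k _; rewrite mxE.
have [_ _ -> hk2] := @arith_hd p q L R t k 0 hpq ht (ltn_ord t) (ltn_ord k).
under eq_bigr => l _ do rewrite ext_seq_delta // inordK //.
rewrite (bigD1 j0) //= eqxx /= big1 ?addr0 // => l hl.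
by rewrite (negbTE hl) mulr0.
Qed.

Lemma arith2 (p q L R : int) (n : nat) :
  p <= q -> (tau p q)%:Z <= R - L ->
  (n < (nsites L R - tau p q) + `|q - p|)%N ->
  (n + `|p - pprime p| < nsites L R)%N /\ (tau p q <= nsites L R)%N.
Proof.
rewrite /tau /nsites => hpq ht hn.
have hP := pprimeE p; have hQ := qprimeE q.
split; lia.
Qed.

Theorem mainTheorem3 (C : numClosedFieldType) (d : nat) (a : int -> 'M[C]_d)
  (p q L R : int) :
  (0 < d)%N -> p <= q -> a p != 0 -> a q != 0 ->
  bbl_regular a p q ->
  L <= R -> (tau p q)%:Z <= R - L ->
  \dim (bulk_space a p q L R) = (d * tau p q)%N.
Proof.
move=> hd hpq hap haq hreg hLR ht.
have htN : (tau p q <= nsites L R)%N by move: ht; rewrite /nsites; lia.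
have ker_eq : bulk_space a p q L R = lker (linfun (@hfun C d a p q L R)).
  rewrite /bulk_space; apply/vspaceP => X; rewrite !memv_ker !lfunE /=.
  apply/eqP/eqP => [h|h].
    by rewrite /hfun h; apply/matrixP => i t; rewrite !mxE.
  apply/matrixP => i c.
  have hc := ltn_ord c.
  case hb: (`|pprime p| <= c < `|pprime p| + (nsites L R - tau p q))%N.
    have ht' : (c - `|pprime p| < nsites L R - tau p q)%N by lia.
    have := congr1 (fun Z : 'M[C]_(d, nsites L R - tau p q) => Z i (Ordinal ht')) h.
    rewrite /= {1}/hfun {1}/colsel mxE.
    have -> : inord (`|pprime p| + Ordinal ht') = c.
      by apply: val_inj; rewrite /= inordK; move: hb hc; unfold nsites; lia.
    by move=> ->; rewrite !mxE.
  by rewrite /bulk_op !mxE (@idx1 p q L R c hpq ht hc) hb.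
have key : forall y : 'rV[C]_(d * (nsites L R - tau p q)),
    y *m (lin_mx (@hfun C d a p q L R))^T = 0 -> y = 0.
  move=> y hy; rewrite -(vec_mxK y).
  suff -> : vec_mx y = 0 by rewrite linear0.
  apply: (@poly_key C d `|q - p|%N _ (fun k => a (p + k%:Z))); first exact: hreg.
  move=> j n hn.
  have [hn' _] := @arith2 p q L R n hpq ht hn.
  have h0 : lin_mx (@hfun C d a p q L R) *m y^T = 0.
    by rewrite -(trmxK (lin_mx _)) -trmx_mul hy trmx0.
  have := congr1 (fun z : 'M[C]_1 => z 0 0)
    (congr1 (mulmx (mxvec (delta_mx j (inord (n + `|p - pprime p|)) : 'M[C]_(d, nsites L R)))) h0).
  rewrite /= mulmxA mul_vec_lin mulmx0 -[y in mxvec _ *m y^T](vec_mxK y) mxvec_dot mxE => h1; apply: (etrans _ h1).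
  apply: eq_bigr => i _; apply: eq_bigr => t _; rewrite hfun_delta //; congr (_ * _).
  by apply: eq_bigr => k _; rewrite eqn_add2r.
have Tfull : row_full (lin_mx (@hfun C d a p q L R)).
  rewrite /row_full -mxrank_tr -[_ == _]/(row_free _) -kermx_eq0.
  apply/eqP/row_matrixP => r; rewrite row0; apply: key.
  by rewrite -row_mul mulmx_ker row0.
have himg : limg (linfun (@hfun C d a p q L R)) = fullv.
  apply/vspaceP => Y; rewrite memvf.
  have [x hx] := submxP (submx_full (mxvec Y) Tfull).
  rewrite mul_rV_lin in hx.
  have -> : Y = @hfun C d a p q L R (vec_mx x) by apply: (can_inj mxvecK).
  apply/memv_imgP; exists (vec_mx x); first exact: memvf.
  by rewrite lfunE.
rewrite ker_eq.
have := limg_ker_dim (linfun (@hfun C d a p q L R)) fullv.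
rewrite capfv himg !dimvf.
rewrite (dim_matrix C d (nsites L R)) (dim_matrix C d (nsites L R - tau p q)).
move=> h.
have {h} : (\dim (lker (linfun (@hfun C d a p q L R))) + d * (nsites L R - tau p q))%N
  = (d * nsites L R)%N by exact: h.
rewrite mulnBr.
have : (d * tau p q <= d * nsites L R)%N by rewrite leq_mul2l htN orbT.
move: (d * nsites L R)%N (d * tau p q)%N (\dim _) => A B D; lia.
Qed.
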